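(* Let $\mathcal{K}\subseteq\mathbb{R}^n$ be a proper convex cone with a $\nu$-LHSCB $f$, and let $A\in\mathbb{R}^{m\times n}$ (full row rank), $\mathbf{b}\in\mathbb{R}^m$, $\mathbf{c}\in\mathbb{R}^n$. Let $\eta>0$, $\tau>0$, $(\mathbf{x},\mathbf{y},\mathbf{s})\in\mathcal{N}(\eta,\tau)$, let $(\Delta\mathbf{x},\Delta\mathbf{y},\Delta\mathbf{s})$ be the solution of the Newton system at $(\mathbf{x},\mathbf{y},\mathbf{s})$ with parameter $\tau$, and let $\mathbf{x}^+=\mathbf{x}+\Delta\mathbf{x}$, $\mathbf{s}^+=\mathbf{s}+\Delta\mathbf{s}$. Then \[\tau(\nu-\eta^2)\le(\mathbf{x}^+)^\top\mathbf{s}^+\le\tau\nu.\]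
   Context: $\mathcal{K}\subseteq\mathbb{R}^n$ is a proper (closed, convex, pointed, full-dimensional) cone with interior $\mathcal{K}^\circ$ and dual cone $\mathcal{K}^*=\{\mathbf{s}:\mathbf{s}^\top\mathbf{x}\ge 0\ \forall \mathbf{x}\in\mathcal{K}\}$. A $\nu$-LHSCB for $\mathcal{K}$ is a strictly convex, three times differentiable $f:\mathcal{K}^\circ\to\mathbb{R}$ with $f(\mathbf{x})\to\infty$ as $\mathbf{x}$ approaches the boundary of $\mathcal{K}$, $|D^3f(\mathbf{x})[\mathbf{h},\mathbf{h},\mathbf{h}]|\le 2\,(D^2f(\mathbf{x})[\mathbf{h},\mathbf{h}])^{3/2}$, $\nu=\sup_{\mathbf{x}\in\mathcal{K}^\circ}g(\mathbf{x})^\top H(\mathbf{x})^{-1}g(\mathbf{x})<\infty$, and $f(t\mathbf{x})=f(\mathbf{x})-\nu\ln t$ for $t>0$; $g,H$ are the gradient and Hessian of $f$. Local norms: $\|\mathbf{v}\|_{\mathbf{x}}=\sqrt{\mathbf{v}^\top H(\mathbf{x})\mathbf{v}}$, $\|\mathbf{v}\|^*_{\mathbf{x}}=\sqrt{\mathbf{v}^\top H(\mathbf{x})^{-1}\mathbf{v}}$. $\mathcal{F}^\circ=\{(\mathbf{x},\mathbf{y},\mathbf{s})\in\mathcal{K}^\circ\times\mathbb{R}^m\times(\mathcal{K}^* )^\circ: A\mathbf{x}=\mathbf{b},\ A^\top\mathbf{y}+\mathbf{s}=\mathbf{c}\}$ (strictly feasible solutions of the pair $\inf\{\mathbf{c}^\top\mathbf{x}:A\mathbf{x}=\mathbf{b},\mathbf{x}\in\mathcal{K}\}$,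 $\sup\{\mathbf{b}^\top\mathbf{y}:A^\top\mathbf{y}+\mathbf{s}=\mathbf{c},\mathbf{s}\in\mathcal{K}^*\}$). $\mathcal{N}(\eta,\tau)=\{(\mathbf{x},\mathbf{y},\mathbf{s})\in\mathcal{F}^\circ:\|\mathbf{s}+\tau g(\mathbf{x})\|^*_{\mathbf{x}}\le\eta\tau\}$. The Newton system at $(\mathbf{x},\mathbf{y},\mathbf{s})$ with parameter $\tau$ is: $A\Delta\mathbf{x}=\mathbf{0}$, $A^\top\Delta\mathbf{y}+\Delta\mathbf{s}=\mathbf{0}$, $\tau H(\mathbf{x})\Delta\mathbf{x}+\Delta\mathbf{s}=-(\mathbf{s}+\tau g(\mathbf{x}))$. *)

(* Defs.v *)
From HB Require Import structures.
From mathcomp Require Import all_boot all_order all_algebra.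
From mathcomp Require Import all_classical all_reals all_analysis.
Set Implicit Arguments. Unset Strict Implicit. Unset Printing Implicit Defensive.
Import Order.TTheory GRing.Theory Num.Theory.
Import numFieldNormedType.Exports.
Local Open Scope classical_set_scope.
Local Open Scope ring_scope.

Section Defs.
Variables (R : realType) (n : nat).
Notation vec := 'cV[R]_n.

Definition dotv (u v : vec) : R := (u^T *m v) 0 0.

Definition is_cone (K : set vec) : Prop :=
  forall x t, K x -> 0 <= t -> K (t *: x).
Definition convex_set (K : set vec) : Prop :=
  forall x y t, K x -> K y -> 0 <= t <= 1 -> K (t *: x + (1 - t) *: y).
Definition pointed (K : set vec) : Prop :=
  forall x, K x -> K (- x) -> x = 0.
Definition proper_cone (K : set vec) : Prop :=
  [/\ is_cone K, closed K, convex_set K, pointed K & interior K !=set0].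

Definition dual_cone (K : set vec) : set vec :=
  [set s | forall x, K x -> 0 <= dotv s x].

(* local dual norm ||v||^*_x given the Hessian matrix Hx = H(x) *)
Definition dual_local_norm (Hx : 'M[R]_n) (v : vec) : R :=
  Num.sqrt ((v^T *m invmx Hx *m v) 0 0).

Definition LHSCB (K : set vec) (f : vec -> R) (g : vec -> vec)
  (H : vec -> 'M[R]_n) (nu : R) : Prop :=
  [/\
      (forall x, interior K x ->
         [/\ differentiable f x, differentiable g x, differentiable H x,
             (forall v, 'D_v f x = dotv (g x) v) &
             (forall v, 'D_v g x = H x *m v)]),
      (forall x y t, interior K x -> interior K y -> x != y -> 0 < t < 1 ->
         f (t *: x + (1 - t) *: y) < t * f x + (1 - t) * f y) &
      [/\
      (forall xb, K xb -> ~ interior K xb ->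
         f x @[x --> within (interior K) (nbhs xb)] --> +oo),
      (forall x h, interior K x ->
         `| ('D_h (fun y => (h^T *m H y *m h) 0 0) x) |
           <= 2 * Num.sqrt ((h^T *m H x *m h) 0 0) ^+ 3),
      (has_sup ((fun x => ((g x)^T *m invmx (H x) *m g x) 0 0) @` interior K) /\
       sup ((fun x => ((g x)^T *m invmx (H x) *m g x) 0 0) @` interior K) = nu) &
      (forall x t, interior K x -> 0 < t -> f (t *: x) = f x - nu * ln t)]].

End Defs.

(* Main.v *)
Require Import Defs.
From HB Require Import structures.
From mathcomp Require Import all_boot all_order all_algebra.
From mathcomp Require Import all_classical all_reals all_analysis.
From mathcomp Require Import ring lra.
Import Order.TTheory GRing.Theory Num.Theory.
Import numFieldNormedType.Exports.
Local Open Scope classical_set_scope.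
Local Open Scope ring_scope.
Section S.
Variable R : realType.

Lemma line_is_derive (V W : normedModType R) (F : V -> W) (p h : V) (t : R) :
  derivable F (p + t *: h) h ->
  is_derive t 1 (fun s : R => F (p + s *: h)) ('D_h F (p + t *: h)).
Proof.
move=> dF.
have E : (fun s : R => s^-1 *: (((fun s => F (p + s *: h)) \o shift t) (s *: 1) - F (p + t *: h)))
   = (fun s => s^-1 *: ((F \o shift (p + t *: h)) (s *: h) - F (p + t *: h))).
  apply: funext => s /=; congr (_ *: (F _ - _)).
  by rewrite [s%:A]mulr1 scalerDl addrCA addrC.
split; rewrite /derivable /derive /=; by rewrite E.
Qed.
Variable n : nat.
Notation vec := 'cV[R]_n.

Lemma euler (K : set vec) (f : vec -> R) (g : vec -> vec) (H : vec -> 'M[R]_n) nu y :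
  LHSCB K f g H nu -> interior K y -> dotv (g y) y = - nu.
Proof.
move=> [hd _ [_ _ _ hom]] Ky.
have [df _ _ Df _] := hd y Ky.
rewrite -Df.
have L : is_derive (0:R) 1 (fun s : R => ln (1 + s *: (1:R))) 1.
  have [d1 v1] := is_derive1_ln (@ltr01 R).
  have := @line_is_derive R^o R^o (@ln R) 1 1 0.
  by rewrite scale0r addr0 v1 invr1; apply.
have G := is_deriveB (is_derive_cst (f y) (0:R) 1) (is_deriveZ nu L).
have lt1 : \forall s \near (0:R), -1 < s.
  by apply: (@cvgr_gt _ _ _ _ id 0 cvg_id); rewrite ltrN10.
have E : \forall s \near (0:R), (cst (f y) - nu *: (fun s : R => ln (1 + s *: (1:R)))) s
                       = (fun s : R => f (y + s *: y)) s.
  apply: filterS lt1 => s hs /=.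
  rewrite -{2}(scale1r y) -scalerDl hom //; last by rewrite -ltrBlDl sub0r.
  change (f y - nu * ln (1 + s *: (1:R^o)) = f y - nu * ln (1 + s)).
  by congr (_ - _ * ln (1 + _)); exact: mulr1.
have := near_eq_is_derive E G.
have := @line_is_derive _ _ f y y 0.
rewrite scale0r addr0 => /(_ (@diff_derivable _ _ _ f y y df)) [_ <-] [_ ->].
by rewrite sub0r; congr (- _); exact: mulr1.
Qed.

Lemma dotvE (u v : vec) : dotv u v = \sum_(i < n) u i 0 * v i 0.
Proof. by rewrite /dotv mxE; apply: eq_bigr => i _; rewrite mxE. Qed.

Lemma dotv_derive (G F : vec -> vec) (x v : vec) :
  derivable G x v -> derivable F x v ->
  derivable (fun y => dotv (G y) (F y)) x v /\
  'D_v (fun y => dotv (G y) (F y)) x = dotv ('D_v G x) (F x) + dotv (G x) ('D_v F x).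
Proof.
move=> dG dF.
have E : (fun y => dotv (G y) (F y)) =
   \sum_(i < n) ((fun y => G y i 0) * (fun y => F y i 0)).
  rewrite fct_sumE; apply: funext => y; rewrite dotvE; apply: eq_bigr => i _ //.
have dGi i : derivable (fun y => G y i 0) x v by move/derivable_mxP: dG; apply.
have dFi i : derivable (fun y => F y i 0) x v by move/derivable_mxP: dF; apply.
rewrite E; split; first by apply: derivable_sum => i; apply: derivableM.
rewrite derive_sum; last by move=> i; apply: derivableM.
rewrite (derive_mx dG) (derive_mx dF) !dotvE -big_split /=.
apply: eq_bigr => i _; rewrite deriveM // !mxE /GRing.scale /= addrC; congr (_ + _); exact: mulrC.
Qed.

Lemma dotvC (u v : vec) : dotv u v = dotv v u.
Proof. by rewrite !dotvE; apply: eq_bigr => i _; rewrite mulrC. Qed.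

Lemma xH (K : set vec) (f : vec -> R) (g : vec -> vec) (H : vec -> 'M[R]_n) nu x v :
  LHSCB K f g H nu -> interior K x -> dotv x (H x *m v) = - dotv (g x) v.
Proof.
move=> hL Kx; have [hd _ _] := hL.
have [df dg dH Df Dg] := hd x Kx.
have N : \forall y \near x, dotv (g y) (id y) = cst (- nu) y.
  apply: filterS (nbhs_interior Kx) => y Ky /=; exact: euler hL Ky.
have [_ D] := @dotv_derive g id x v (@diff_derivable _ _ _ g x v dg) (@derivable_id _ _ x v).
move: D; rewrite (near_eq_derive _ N) derive_cst derive_id Dg => /eqP.
by rewrite eq_sym addr_eq0 dotvC => /eqP.
Qed.

Lemma dotvDl (a b c : vec) : dotv (a + b) c = dotv a c + dotv b c.
Proof. by rewrite !dotvE -big_split; apply: eq_bigr => i _; rewrite mxE mulrDl. Qed.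
Lemma dotvNl (a c : vec) : dotv (- a) c = - dotv a c.
Proof. by rewrite !dotvE -sumrN; apply: eq_bigr => i _; rewrite mxE mulNr. Qed.
Lemma dotvBl (a b c : vec) : dotv (a - b) c = dotv a c - dotv b c.
Proof. by rewrite dotvDl dotvNl. Qed.
Lemma dotvZl k (a c : vec) : dotv (k *: a) c = k * dotv a c.
Proof. by rewrite !dotvE mulr_sumr; apply: eq_bigr => i _; rewrite mxE mulrA. Qed.

Lemma entry_le_norm (w : vec) i : `|w i 0| <= `|w|.
Proof.
rewrite [leRHS]/Num.Def.normr /= mx_normrE; apply/bigmax_geP; right => /=.
by exists (i, 0).
Qed.

Lemma dotv_le (w u : vec) : `|dotv w u| <= `|w| * \sum_(i < n) `|u i 0|.
Proof.
rewrite dotvE mulr_sumr; apply: le_trans (ler_norm_sum _ _ _) _.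
apply: ler_sum => i _; rewrite normrM; apply: ler_wpM2r => //.
exact: entry_le_norm.
Qed.

Lemma frechet (G : vec -> vec) (x : vec) (M : 'M[R]_n) :
  differentiable G x -> (forall v, 'D_v G x = M *m v) ->
  forall e, 0 < e -> \forall z \near (0 : vec), `|G (x + z) - G x - M *m z| <= e * `|z|.
Proof.
move=> dG DG e e0.
have := diff_locally dG; move/eqaddoP => /(_ e e0).
apply: filterS => z /=.
by rewrite !fctE /= -(deriveE z dG) DG opprD addrA [z + x]addrC.
Qed.

Lemma near0_ball (P : vec -> Prop) :
  (\forall z \near (0 : vec), P z) -> exists2 r : R, 0 < r & forall z, `|z| < r -> P z.
Proof. by move/nbhs_norm0P => [r r0 Hr]; exists r. Qed.

Lemma line_deriv_f (K : set vec) (f : vec -> R) (g : vec -> vec) (H : vec -> 'M[R]_n) nu p h s :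
  LHSCB K f g H nu -> interior K (p + s *: h) ->
  is_derive s 1 (fun s : R => f (p + s *: h)) (dotv (g (p + s *: h)) h).
Proof.
move=> [hd _ _] Kp; have [df _ _ Df _] := hd _ Kp.
rewrite -Df; apply: line_is_derive; exact: diff_derivable.
Qed.

Lemma approx (K : set vec) (f : vec -> R) (g : vec -> vec) (H : vec -> 'M[R]_n) nu x u v e :
  LHSCB K f g H nu -> interior K x -> 0 < e ->
  exists2 r : R, 0 < r & forall t, 0 < t -> t <= r ->
    `|f (x + t *: v + t *: u) - f (x + t *: u) - f (x + t *: v) + f x
       - t ^+ 2 * dotv u (H x *m v)| <= e * t ^+ 2.
Proof.
move=> hL Kx e0; have [hd _ _] := hL.
have [df dg dH Df Dg] := hd x Kx.
set M := H x.
set Su := \sum_(i < n) `|u i 0|.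
set a := `|u| + `|v|.
have Su0 : 0 <= Su by apply: sumr_ge0 => i _.
have a0 : 0 <= a by rewrite addr_ge0.
set C := 2 * (a + 1) * (Su + 1).
have C0 : 0 < C by rewrite !mulr_gt0 // ltr_wpDl.
set e' := e / C.
have e'0 : 0 < e' by rewrite divr_gt0.
have P1 := @frechet g x M dg Dg _ e'0.
have P2 : \forall z \near (0:vec), interior K (x + z) := (nbhs0P _ x).1 (nbhs_interior Kx).
have [r1 r10 Hr1] := near0_ball _ P1.
have [r2 r20 Hr2] := near0_ball _ P2.
set r := Order.min r1 r2.
have r0 : 0 < r by rewrite lt_min r10 r20.
have Hr z : `|z| < r -> `|g (x + z) - g x - M *m z| <= e' * `|z| /\ interior K (x + z).
  by rewrite lt_min => /andP[h1 h2]; split; [exact: Hr1|exact: Hr2].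
exists (r / (a + 1)); first by rewrite divr_gt0 // ltr_wpDl.
move=> t t0 tr.
have tar : t * a < r.
  apply: lt_le_trans (_ : t * (a + 1) <= r).
    by rewrite ltr_pM2l // ltrDl.
  by rewrite -ler_pdivlMr // ltr_wpDl.
have nZ (k : R) (w : vec) : 0 <= k -> `|k *: w| = k * `|w|.
  by move=> k0; rewrite normrZ ger0_norm.
have Hz1 σ : 0 <= σ <= t -> `|t *: v + σ *: u| <= t * a.
  move=> /andP[s0 st]; apply: le_trans (ler_normD _ _) _.
  rewrite !nZ ?(ltW t0) // /a mulrDr [t * _ + _]addrC lerD2r ler_wpM2r //.
have Hz2 σ : 0 <= σ <= t -> `|σ *: u| <= t * a.
  move=> /andP[s0 st]; rewrite nZ // /a; apply: le_trans (_ : t * `|u| <= _).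
    by rewrite ler_wpM2r.
  by rewrite ler_wpM2l ?(ltW t0) // /a lerDl.
pose phi := fun s : R => f (x + t *: v + s *: u) - f (x + s *: u).
pose dphi := fun s : R => dotv (g (x + t *: v + s *: u)) u - dotv (g (x + s *: u)) u.
have Dphi σ : 0 <= σ <= t -> is_derive σ 1 phi (dphi σ).
  move=> hs.
  have K1 : interior K (x + t *: v + σ *: u).
    by rewrite -addrA; apply: (Hr _ (le_lt_trans (Hz1 _ hs) tar)).2.
  have K2 : interior K (x + σ *: u).
    by apply: (Hr _ (le_lt_trans (Hz2 _ hs) tar)).2.
  exact: is_deriveB (@line_deriv_f K f g H nu _ _ _ hL K1) (@line_deriv_f K f g H nu _ _ _ hL K2).
have [c cI Ec] : exists2 c, c \in `]0, t[ & phi t - phi 0 = dphi c * (t - 0).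
  apply: MVT => //.
    move=> s; rewrite in_itv /= => /andP[h1 h2]; apply: Dphi.
    by rewrite ltW // ltW.
  apply: derivable_within_continuous => s; rewrite in_itv /= => hs.
  by have [] := Dphi s hs.
have E1 : f (x + t *: v + t *: u) - f (x + t *: u) - f (x + t *: v) + f x = phi t - phi 0.
  rewrite /phi !scale0r !addr0; ring.
rewrite E1 Ec subr0.
have cI' : 0 <= c <= t by move: cI; rewrite in_itv /= => /andP[h1 h2]; rewrite !ltW.
set z1 := t *: v + c *: u.
set z2 := c *: u.
set g1 := g (x + z1).
set g2 := g (x + z2).
set E1v := g1 - g x - M *m z1.
set E2v := g2 - g x - M *m z2.
have B1 : `|E1v| <= e' * (t * a).
  apply: le_trans (Hr _ (le_lt_trans (Hz1 _ cI') tar)).1 _.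
  by rewrite ler_wpM2l ?(ltW e'0) // Hz1.
have B2 : `|E2v| <= e' * (t * a).
  apply: le_trans (Hr _ (le_lt_trans (Hz2 _ cI') tar)).1 _.
  by rewrite ler_wpM2l ?(ltW e'0) // Hz2.
have L1 : dotv E1v u = dotv g1 u - dotv (g x) u - dotv (M *m z1) u by rewrite !dotvBl.
have L2 : dotv E2v u = dotv g2 u - dotv (g x) u - dotv (M *m z2) u by rewrite !dotvBl.
have L3 : dotv (M *m z1) u = t * dotv (M *m v) u + dotv (M *m z2) u.
  by rewrite mulmxDr -scalemxAr dotvDl dotvZl.
have L4 : dotv (E1v - E2v) u = dotv E1v u - dotv E2v u by rewrite dotvBl.
have Ed : dphi c = dotv g1 u - dotv g2 u by rewrite /dphi /g1 /z1 addrA.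
have -> : dphi c * t - t ^+ 2 * dotv u (M *m v) = t * dotv (E1v - E2v) u.
  rewrite Ed L4 L1 L2 L3 (dotvC u); ring.
rewrite normrM (gtr0_norm t0).
have B3 : `|dotv (E1v - E2v) u| <= 2 * e' * (t * a) * Su.
  apply: le_trans (dotv_le _ _) _; apply: ler_wpM2r => //.
  apply: le_trans (ler_normB _ _) _; rewrite -mulrA mulr2n mulrDl mul1r.
  exact: lerD.
apply: le_trans (ler_wpM2l (ltW t0) B3) _.
have eC : e = e' * C by rewrite /e' divfK // gt_eqF.
rewrite eC /C.
have h : a * Su <= (a + 1) * (Su + 1) by nra.
have hp : 0 <= t ^+ 2 * e' by rewrite mulr_ge0 // ?exprn_ge0 // ltW.
nra.
Qed.

Lemma Hsym (K : set vec) (f : vec -> R) (g : vec -> vec) (H : vec -> 'M[R]_n) nu x u v :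
  LHSCB K f g H nu -> interior K x -> dotv u (H x *m v) = dotv v (H x *m u).
Proof.
move=> hL Kx.
apply/eqP; rewrite -subr_eq0 -normr_le0; apply/ler_addgt0Pr => e e0; rewrite add0r.
have e20 : 0 < e / 2 by rewrite divr_gt0.
have [r1 r10 H1] := @approx K f g H nu x u v _ hL Kx e20.
have [r2 r20 H2] := @approx K f g H nu x v u _ hL Kx e20.
set t := Order.min r1 r2.
have t0 : 0 < t by rewrite lt_min r10 r20.
have tr1 : t <= r1 by rewrite ge_min lexx.
have tr2 : t <= r2 by rewrite ge_min lexx orbT.
have := H1 t t0 tr1; have := H2 t t0 tr2.
rewrite [x + t *: u + t *: v]addrAC.
set D1 := f (x + t *: v + t *: u).
set A := f (x + t *: u); set B := f (x + t *: v).
have -> : D1 - B - A + f x = D1 - A - B + f x by ring.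
set D := D1 - A - B + f x.
move=> h2 h1.
have : `|t ^+ 2 * (dotv u (H x *m v) - dotv v (H x *m u))| <= e * t ^+ 2.
  have -> : t ^+ 2 * (dotv u (H x *m v) - dotv v (H x *m u)) =
     (D - t ^+ 2 * dotv v (H x *m u)) - (D - t ^+ 2 * dotv u (H x *m v)) by ring.
  apply: le_trans (ler_normB _ _) _.
  have -> : e * t ^+ 2 = e / 2 * t ^+ 2 + e / 2 * t ^+ 2 by field.
  exact: lerD.
have tt0 : 0 < t ^+ 2 by rewrite exprn_gt0.
by rewrite normrM (gtr0_norm tt0) [e * _]mulrC ler_pM2l.
Qed.

Lemma deriv_neg_left (Phi : R -> R) (c d b : R) : is_derive c 1 Phi d -> d < 0 -> b < c ->
  exists s, b < s < c /\ Phi c < Phi s.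
Proof.
move=> [dP dv] d0 bc.
have Q : (fun h : R => h^-1 *: ((Phi \o shift c) (h *: 1) - Phi c)) @ 0^' --> d.
  by rewrite -dv; exact: dP.
have N := @cvgr_lt R _ _ _ _ _ Q 0 d0.
rewrite near_withinE in N.
have [/= e e0 He] := nbhs_norm0P.1 (N _).
set k := Order.min (e / 2) ((c - b) / 2).
have k0 : 0 < k by rewrite lt_min !divr_gt0 // subr_gt0.
have k1 : k <= e / 2 by rewrite /k ge_min lexx.
have k2 : k <= (c - b) / 2 by rewrite /k ge_min lexx orbT.
have ke : `|- k| < e by rewrite normrN gtr0_norm //; lra.
have hk : - k != 0 by rewrite oppr_eq0 gt_eqF.
have := He (- k) ke hk.
move=> hq; have : (- k)^-1 * (Phi ((- k) * 1 + c) - Phi c) < 0 := hq.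
rewrite nmulr_rlt0 ?invr_lt0 ?oppr_lt0 // mulr1 subr_gt0 => hP.
exists (- k + c); split => //; apply/andP; split; lra.
Qed.

Lemma ode_nonpos (psi dpsi : R -> R) (T : R) :
  0 < T ->
  (forall s, 0 <= s <= T -> is_derive s 1 psi (dpsi s)) ->
  (forall s, 0 <= s <= T -> dpsi s <= 2 * Num.sqrt (psi s) ^+ 3) ->
  psi 0 <= 0 ->
  exists2 T1, 0 < T1 /\ T1 <= T & forall s, 0 <= s <= T1 -> psi s <= 0.
Proof.
move=> T0 Dpsi Bpsi psi0.
have cont : forall a b, 0 <= a -> b <= T -> {within `[a, b], continuous psi}.
  move=> a b a0 bT; apply: derivable_within_continuous => s.
  rewrite in_itv /= => /andP[h1 h2].
  have [] // := Dpsi s; apply/andP; split; [exact: le_trans h1|exact: le_trans bT].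
have [cm cmI Hcm] := EVT_max (ltW T0) (cont 0 T (lexx _) (lexx _)).
set L := 2 * Num.sqrt (psi cm).
have L0 : 0 <= L by rewrite mulr_ge0 // sqrtr_ge0.
set T1 := Order.min T (1 / (4 * (L + 1))).
have T10 : 0 < T1 by rewrite lt_min T0 divr_gt0 // mulr_gt0 // ltr_wpDl.
have T1T : T1 <= T by rewrite ge_min lexx.
have T1L : T1 * (4 * (L + 1)) <= 1.
  rewrite -ler_pdivlMr ?mulr_gt0 ?ltr_wpDl //; by rewrite ge_min lexx orbT.
exists T1 => // s /andP[s0 sT1].
rewrite leNgt; apply/negP => ps.
pose c := 2 * T1.
pose Phi := psi * (cst c - id).
have PhiE t : Phi t = psi t * (c - t) by [].
have DPhi t : 0 <= t <= T -> is_derive t 1 Phi (psi t *: (0 - 1) + (c - t) *: dpsi t).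
  move=> ht; exact: is_deriveM (Dpsi t ht) (is_deriveB (is_derive_cst c t 1) (is_derive_id t 1)).
have contPhi : {within `[0, s], continuous Phi}.
  apply: derivable_within_continuous => t; rewrite in_itv /= => /andP[h1 h2].
  by have [] // := DPhi t; rewrite h1 /= (le_trans h2) // (le_trans sT1).
have [sm smI Hsm] := EVT_max s0 contPhi.
move: smI; rewrite in_itv /= => /andP[sm0 sms].
have PhiS : 0 < Phi s by rewrite PhiE mulr_gt0 // subr_gt0 /c; lra.
have Psm : 0 < Phi sm by apply: lt_le_trans PhiS (Hsm _ _); rewrite in_itv /= s0 lexx.
have csm : 0 < c - sm by rewrite /c; lra.
have psm : 0 < psi sm by move: Psm; rewrite PhiE pmulr_lgt0.
have sm_pos : 0 < sm.
  rewrite lt_neqAle sm0 andbT; apply/negP => /eqP sm_eq; rewrite -sm_eq in psm; lra.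
have smT : 0 <= sm <= T by rewrite sm0 /= (le_trans sms) // (le_trans sT1).
have hmax : psi sm <= psi cm by apply: Hcm; rewrite in_itv /= sm0 /= (le_trans sms) // (le_trans sT1).
have sq : Num.sqrt (psi sm) <= Num.sqrt (psi cm) by rewrite ler_sqrt // (le_trans (ltW psm)).
have sq2 : Num.sqrt (psi sm) ^+ 2 = psi sm by rewrite sqr_sqrtr // ltW.
have sq0 : 0 <= Num.sqrt (psi sm) by rewrite sqrtr_ge0.
have B1 : dpsi sm <= L * psi sm.
  apply: le_trans (Bpsi _ smT) _.
  have hh : 0 <= (Num.sqrt (psi cm) - Num.sqrt (psi sm)) * Num.sqrt (psi sm) ^+ 2.
    by rewrite mulr_ge0 ?subr_ge0 // exprn_ge0.
  rewrite /L; nra.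
have dneg : psi sm *: (0 - 1) + (c - sm) *: dpsi sm < 0.
  change (psi sm * (0 - 1) + (c - sm) * dpsi sm < 0).
  have h1 : 0 <= (c - sm) * (L * psi sm - dpsi sm).
    by apply: mulr_ge0; [exact: ltW|rewrite subr_ge0].
  have h2 : 0 <= (2 * T1 - (c - sm)) * (L * psi sm).
    apply: mulr_ge0; last by apply: mulr_ge0 => //; exact: ltW.
    rewrite /c; lra.
  have h3 : 0 <= psi sm * (1 - T1 * (4 * (L + 1))).
    by apply: mulr_ge0; [exact: ltW|rewrite subr_ge0].
  have h4 : 0 <= T1 * psi sm by apply: mulr_ge0; exact: ltW.
  have cE : c = 2 * T1 by [].
  nra.
have [s' [/andP[s'0 s'sm] hlt]] := @deriv_neg_left Phi sm _ 0 (DPhi sm smT) dneg sm_pos.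
have : Phi s' <= Phi sm by apply: Hsm; rewrite in_itv /= ltW //= (le_trans (ltW s'sm)).
by rewrite leNgt hlt.
Qed.

Lemma cont_of_der (F dF : R -> R) (T a b : R) :
  (forall s, 0 <= s <= T -> is_derive s 1 F (dF s)) -> 0 <= a -> b <= T ->
  {within `[a, b], continuous F}.
Proof.
move=> D a0 bT; apply: derivable_within_continuous => s.
rewrite in_itv /= => /andP[h1 h2].
have [] // := D s; apply/andP; split; [exact: le_trans h1|exact: le_trans bT].
Qed.

Lemma concave_mid (phi dphi ddphi : R -> R) (T : R) :
  0 < T ->
  (forall s, 0 <= s <= T -> is_derive s 1 phi (dphi s)) ->
  (forall s, 0 <= s <= T -> is_derive s 1 dphi (ddphi s)) ->
  (forall s, 0 <= s <= T -> ddphi s <= 0) ->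
  (phi 0 + phi T) / 2 <= phi (T / 2).
Proof.
move=> T0 D1 D2 neg.
have T20 : 0 < T / 2 by rewrite divr_gt0.
have T2T : T / 2 < T by lra.
have [a aI Ea] : exists2 a, a \in `]0, T / 2[ & phi (T / 2) - phi 0 = dphi a * (T / 2 - 0).
  apply: MVT => //; last exact: (@cont_of_der _ _ T _ _ D1 (lexx 0) (ltW T2T)).
  move=> s; rewrite in_itv /= => /andP[h1 h2]; apply: D1; apply/andP; split; lra.
have [b bI Eb] : exists2 b, b \in `]T / 2, T[ & phi T - phi (T / 2) = dphi b * (T - T / 2).
  apply: MVT => //; last exact: (@cont_of_der _ _ T _ _ D1 (ltW T20) (lexx T)).
  move=> s; rewrite in_itv /= => /andP[h1 h2]; apply: D1; apply/andP; split; lra.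
move: aI bI; rewrite !in_itv /= => /andP[a1 a2] /andP[b1 b2].
have ab : a < b by lra.
have [c cI Ec] : exists2 c, c \in `]a, b[ & dphi b - dphi a = ddphi c * (b - a).
  apply: MVT => //; last by apply: (@cont_of_der _ _ T _ _ D2); lra.
  move=> s; rewrite in_itv /= => /andP[h1 h2]; apply: D2; apply/andP; split; lra.
move: cI; rewrite in_itv /= => /andP[c1 c2].
have hc : ddphi c <= 0 by apply: neg; apply/andP; split; lra.
have hba : dphi b <= dphi a.
  rewrite -subr_le0 Ec; apply: mulr_le0_ge0 => //; lra.
have : dphi b * (T / 2) <= dphi a * (T / 2) by rewrite ler_pM2r.
have hT : T - T / 2 = T / 2 by field.
rewrite subr0 in Ea; rewrite hT in Eb.
lra.
Qed.

Lemma dotv0r (u : vec) : dotv u 0 = 0.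
Proof. by rewrite dotvE big1 // => i _; rewrite mxE mulr0. Qed.

Lemma derivable_mulmxr (M : vec -> 'M[R]_n) (y v w : vec) :
  derivable M y v -> derivable (fun z => M z *m w) y v.
Proof.
move=> dM; apply/derivable_mxP => i j.
have E : (fun z => (M z *m w) i j) = \sum_(k < n) (w k j *: (fun z => M z i k)).
  rewrite fct_sumE; apply: funext => z; rewrite mxE; apply: eq_bigr => k _ /=.
  by rewrite mulrC.
rewrite E; apply: derivable_sum => k; apply: derivableZ.
by move/derivable_mxP: dM; apply.
Qed.

Lemma Hpd (K : set vec) (f : vec -> R) (g : vec -> vec) (H : vec -> 'M[R]_n) nu x h :
  LHSCB K f g H nu -> interior K x -> h != 0 -> 0 < dotv h (H x *m h).
Proof.
move=> hL Kx h0; have [hd hconv [_ hsc _ _]] := hL.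
rewrite ltNge; apply/negP => hle.
have [r r0 Hr] := near0_ball _ ((nbhs0P _ x).1 (nbhs_interior Kx)).
have nh0 : 0 <= `|h| by [].
set T := r / (`|h| + 1).
have T0 : 0 < T by rewrite divr_gt0 // ltr_wpDl.
have Ks s : 0 <= s <= T -> interior K (x + s *: h).
  move=> /andP[s0 sT]; apply: Hr; rewrite normrZ ger0_norm //.
  apply: (le_lt_trans (ler_wpM2r nh0 sT)).
  rewrite /T mulrAC ltr_pdivrMr ?ltr_wpDl // ltr_pM2l //; lra.
pose Q := fun y => dotv h (H y *m h).
have QE : (fun y => (h^T *m H y *m h) 0 0) = Q.
  by apply: funext => y; rewrite /Q /dotv mulmxA.
have dQ y : interior K y -> derivable Q y h.
  move=> Ky; have [_ _ dH _ _] := hd y Ky.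
  have [dd _] := @dotv_derive (fun _ => h) (fun z => H z *m h) y h (derivable_cst _ _ _)
    (@derivable_mulmxr H y h h (@diff_derivable _ _ _ H y h dH)).
  exact: dd.
pose psi := fun s : R => Q (x + s *: h).
pose dpsi := fun s : R => 'D_h Q (x + s *: h).
have Dpsi s : 0 <= s <= T -> is_derive s 1 psi (dpsi s).
  by move=> hs; apply: line_is_derive; apply: dQ; apply: Ks.
have Bpsi s : 0 <= s <= T -> dpsi s <= 2 * Num.sqrt (psi s) ^+ 3.
  move=> hs; have := hsc (x + s *: h) h (Ks s hs); rewrite QE.
  rewrite /psi -/(Q _) /Q /dotv mulmxA => hb.
  by apply: le_trans (ler_norm _) hb.
have psi0 : psi 0 <= 0 by rewrite /psi scale0r addr0.
have [T1 [T10 T1T] Hneg] := @ode_nonpos psi dpsi T T0 Dpsi Bpsi psi0.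
have sub s : 0 <= s <= T1 -> 0 <= s <= T.
  by move=> /andP[h1 h2]; rewrite h1 /= (le_trans h2).
pose phi := fun s : R => f (x + s *: h).
pose dphi := fun s : R => dotv (g (x + s *: h)) h.
have D1 s : 0 <= s <= T1 -> is_derive s 1 phi (dphi s).
  move=> hs; exact: (@line_deriv_f K f g H nu x h s hL (Ks s (sub s hs))).
have D2 s : 0 <= s <= T1 -> is_derive s 1 dphi (psi s).
  move=> hs; have Ky := Ks s (sub s hs).
  have [_ dg _ _ Dg] := hd _ Ky.
  have [dd DD] := @dotv_derive g (fun _ => h) (x + s *: h) h
     (@diff_derivable _ _ _ g _ h dg) (derivable_cst _ _ _).
  have := @line_is_derive _ _ (fun y => dotv (g y) h) x h s dd.
  rewrite DD Dg (derive_cst h) dotv0r addr0 dotvC; exact.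
have := @concave_mid phi dphi psi T1 T10 D1 D2 Hneg.
rewrite /phi scale0r addr0 => hmid.
have hx1 : interior K (x + T1 *: h) by apply: Ks; rewrite (ltW T10) T1T.
have ne : x + T1 *: h != x.
  rewrite -subr_eq0 addrC addKr scaler_eq0.
  by rewrite (negbTE h0) orbF gt_eqF.
have half : (0 < (1 / 2 : R)) && ((1 / 2 : R) < 1).
  by apply/andP; split; lra.
have := hconv _ _ (1 / 2) hx1 Kx ne half.
have -> : 1 / 2 *: (x + T1 *: h) + (1 - 1 / 2) *: x = x + T1 / 2 *: h.
  rewrite scalerDr scalerA addrAC -scalerDl.
  have -> : (1 / 2 + (1 - 1 / 2) : R) = 1 by field.
  by rewrite scale1r mulrC mul1r.
lra.
Qed.

Lemma dotvDr (a b c : vec) : dotv c (a + b) = dotv c a + dotv c b.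
Proof. by rewrite !(dotvC c) dotvDl. Qed.
Lemma dotvNr (a c : vec) : dotv c (- a) = - dotv c a.
Proof. by rewrite !(dotvC c) dotvNl. Qed.
Lemma dotvZr k (a c : vec) : dotv c (k *: a) = k * dotv c a.
Proof. by rewrite !(dotvC c) dotvZl. Qed.
Lemma dotv0l (u : vec) : dotv 0 u = 0.
Proof. by rewrite dotvC dotv0r. Qed.

Lemma Hpsd (K : set vec) (f : vec -> R) (g : vec -> vec) (H : vec -> 'M[R]_n) nu x w :
  LHSCB K f g H nu -> interior K x -> 0 <= dotv w (H x *m w).
Proof.
move=> hL Kx; have [->|w0] := eqVneq w 0; first by rewrite dotv0l.
exact: ltW (@Hpd K f g H nu x w hL Kx w0).
Qed.

Lemma Hunit (K : set vec) (f : vec -> R) (g : vec -> vec) (H : vec -> 'M[R]_n) nu x :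
  LHSCB K f g H nu -> interior K x -> H x \in unitmx.
Proof.
move=> hL Kx; rewrite -unitmx_tr -row_free_unit; apply: inj_row_free => v hv.
have hw : H x *m v^T = 0 by rewrite -(trmxK (H x)) -trmx_mul hv trmx0.
apply: trmx_inj; rewrite trmx0; apply/eqP; apply: contraT => w0.
by have := @Hpd K f g H nu x _ hL Kx w0; rewrite hw dotv0r ltxx.
Qed.
End S.

Theorem lemma2p3 (R : realType) (n m : nat) (K : set 'cV[R]_n)
  (f : 'cV[R]_n -> R) (g : 'cV[R]_n -> 'cV[R]_n) (H : 'cV[R]_n -> 'M[R]_n)
  (nu : R) (A : 'M[R]_(m, n)) (b : 'cV[R]_m) (c : 'cV[R]_n)
  (eta tau : R) (x : 'cV[R]_n) (y : 'cV[R]_m) (s : 'cV[R]_n)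
  (dx : 'cV[R]_n) (dy : 'cV[R]_m) (ds : 'cV[R]_n) :
  proper_cone K -> LHSCB K f g H nu ->
  \rank A = m ->
  0 < eta -> 0 < tau ->
  (* (x, y, s) in N(eta, tau) *)
  interior K x -> interior (dual_cone K) s ->
  A *m x = b -> A^T *m y + s = c ->
  dual_local_norm (H x) (s + tau *: g x) <= eta * tau ->
  (* Newton system *)
  A *m dx = 0 -> A^T *m dy + ds = 0 ->
  tau *: (H x *m dx) + ds = - (s + tau *: g x) ->
  tau * (nu - eta ^+ 2) <= dotv (x + dx) (s + ds) <= tau * nu.
Proof.
move=> pK hL rA eta0 tau0 Kx Ks Ax Ay Hnorm Adx Ady Newton.
set Hx := H x.
set Mi := invmx Hx.
have hU : Hx \in unitmx := @Hunit R n K f g H nu x hL Kx.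
set Q := dotv dx (Hx *m dx).
have Q0 : 0 <= Q := @Hpsd R n K f g H nu x dx hL Kx.
have dxds : dotv dx ds = 0.
  have -> : ds = - (A^T *m dy) by apply/eqP; rewrite -addr_eq0 addrC Ady.
  by rewrite dotvNr /dotv mulmxA -trmx_mul Adx trmx0 mul0mx mxE oppr0.
set r := s + tau *: g x.
have r_eq : r = - (tau *: (Hx *m dx) + ds) by rewrite Newton opprK.
set q := Mi *m ds.
have dsq : Hx *m q = ds := mulKVmx hU ds.
have p_eq : Mi *m r = - (tau *: dx + q) by rewrite r_eq mulmxN mulmxDr -scalemxAr mulKmx.
have Nr : dotv r (Mi *m r) = tau ^+ 2 * Q + dotv q (Hx *m q).
  rewrite p_eq {1}r_eq dotvNl dotvNr opprK !dotvDl !dotvDr !dotvZl !dotvZr.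
  have e1 : dotv (Hx *m dx) dx = Q by rewrite dotvC.
  have e2 : dotv (Hx *m dx) q = 0.
    by rewrite dotvC (@Hsym R n K f g H nu x q dx hL Kx) dsq dxds.
  have e3 : dotv ds dx = 0 by rewrite dotvC dxds.
  have e4 : dotv ds q = dotv q (Hx *m q) by rewrite dsq dotvC.
  rewrite e1 e2 e3 e4; ring.
have Nr0 : tau ^+ 2 * Q <= dotv r (Mi *m r).
  by rewrite Nr lerDl (@Hpsd R n K f g H nu x q hL Kx).
have Nb : dotv r (Mi *m r) <= (eta * tau) ^+ 2.
  move: Hnorm; rewrite /dual_local_norm -/Hx -/Mi -/r.
  have -> : (r^T *m Mi *m r) 0 0 = dotv r (Mi *m r) by rewrite /dotv mulmxA.
  have et0 : 0 <= eta * tau by rewrite mulr_ge0 // ltW.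
  rewrite -{1}(ger0_norm et0) -sqrtr_sqr ler_sqrt //; exact: sqr_ge0.
have QB : Q <= eta ^+ 2.
  have : tau ^+ 2 * Q <= tau ^+ 2 * eta ^+ 2.
    by apply: le_trans Nr0 (le_trans Nb _); rewrite exprMn mulrC.
  by rewrite ler_pM2l // exprn_gt0.
have Eu : dotv x (g x) = - nu by rewrite dotvC (@euler R n K f g H nu x hL Kx).
have XH : dotv x (Hx *m dx) = - dotv (g x) dx := @xH R n K f g H nu x dx hL Kx.
have EN w : tau * dotv w (Hx *m dx) + dotv w ds = - dotv w s - tau * dotv w (g x).
  by rewrite -dotvZr -dotvDr Newton dotvNr dotvDr dotvZr opprD.
have EN1 := EN x; have EN2 := EN dx.
have Gdx : dotv dx (g x) = dotv (g x) dx by rewrite dotvC.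
have T : dotv (x + dx) (s + ds) = dotv x s + dotv x ds + (dotv dx s + dotv dx ds).
  by rewrite dotvDl !dotvDr.
rewrite T dxds.
rewrite -/Q in EN2.
apply/andP; split; nra.
Qed.
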